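(* There are absolute constants $C,c>0$ such that the following holds. Given a graph $G=(V,E)$ with $|V|=n$, maximum degree $\Delta$ and distinct IDs, and a fixed parameter $1\le p\le\Delta$, there is a distributed algorithm in the LOCAL model running in $O(\log^* n)$ rounds that computes for every vertex $v$ a set $S_v\subseteq\{1,\dots,m\}$ with $m\le C(\Delta/p)^2$ and $|S_v|\ge c\Delta/p$, such that every choice of one color from each $S_v$ is a $p$-defective $m$-coloring of $G$. Thus the solution domain has size $\Omega(\Delta/p)$ and the contingency factor is $O(\Delta/p)$.
   Context: A map $\varphi:V\to\{1,\dots,m\}$ is a $p$-defective $m$-coloring if every vertex has at most $p$ neighbors of its own color. LOCAL model: synchronous rounds, unbounded messages along edges; complexity measured in rounds. Solution domain size $=\min_v|S_v|$; contingency factor $=m/\min_v|S_v|$. *)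

(* Defs.v *)
From mathcomp Require Import all_boot all_order.
Set Implicit Arguments. Unset Strict Implicit. Unset Printing Implicit Defensive.

Definition simple_graph (T : finType) (e : rel T) : Prop :=
  symmetric e /\ irreflexive e.

Definition deg (T : finType) (e : rel T) (v : T) : nat := #|[set u | e v u]|.

Definition maxdeg (T : finType) (e : rel T) : nat := \max_(v : T) deg e v.

Fixpoint ball (T : finType) (e : rel T) (k : nat) (v : T) : {set T} :=
  match k with
  | 0 => [set v]
  | k'.+1 => ball e k' v :|: [set y | [exists z in ball e k' v, e z y]]
  end.

Definition inner (T : finType) (e : rel T) (r : nat) (v : T) : {set T} :=
  if r is r'.+1 then ball e r' v else set0.

(* The information available at v after r rounds of LOCAL (full-information
   flooding): its own ID and all edges (as ID pairs) incident to vertices at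
   distance < r from v. *)
Definition view (T : finType) (e : rel T) (id : T -> nat) (r : nat) (v : T)
  : nat * (nat -> nat -> bool) :=
  (id v, fun a b => [exists x, exists y,
      [&& x \in inner e r v, e x y, id x == a & id y == b]]).

(* A deterministic LOCAL algorithm: given the global parameters n, Delta, p,
   the output of a vertex is a function of its radius-r view. *)
Definition local_algo := nat -> nat -> nat -> nat * (nat -> nat -> bool) -> seq nat.

Definition defective (T : finType) (e : rel T) (p : nat) (phi : T -> nat) : Prop :=
  forall v, #|[set u | e v u & phi u == phi v]| <= p.

Fixpoint logstar_aux (fuel n : nat) : nat :=
  match fuel with
  | 0 => 0
  | f.+1 => if n <= 1 then 0 else (logstar_aux f (trunc_log 2 n)).+1
  end.
Definition logstar (n : nat) : nat := logstar_aux n n.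

(* Main.v *)
Require Import Defs.
From mathcomp Require Import all_boot all_order.
From mathcomp Require Import all_algebra all_field zify.
Set Implicit Arguments. Unset Strict Implicit. Unset Printing Implicit Defensive.

Module CodeM.
Import GRing.Theory.

Definition GFs (e : nat) := pPrimePowerField (p:=2) (k:=e.+1) (isT : prime 2) (ltn0Sn e).
Definition GF (e : nat) : finFieldType := s2val (GFs e).
Lemma card_GF e : #|GF e| = 2 ^ e.+1.
Proof. by rewrite /GF; case: (GFs e). Qed.

Section Code.
Variable e : nat.
Local Notation F := (GF e).
Local Notation k := (2 ^ e.+1).
Definition els : seq F := 0%R :: [seq x <- enum F | x != 0%R].
Lemma els_uniq : uniq els.
Proof.
rewrite /els /= mem_filter eqxx /=; apply: filter_uniq; exact: enum_uniq.
Qed.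
Lemma mem_els x : x \in els.
Proof.
rewrite /els inE mem_filter mem_enum andbT; by case: eqP.
Qed.
Lemma size_els : size els = k.
Proof.
rewrite -card_GF -(card_uniqP els_uniq); apply: eq_card => x; by rewrite mem_els.
Qed.
Definition felt (d : nat) : F := nth 0%R els d.
Definition digit (c l : nat) := c %/ k ^ l %% k.
Definition cpoly (c : nat) : {poly F} := \poly_(l < c) felt (digit c l).
Definition code (c i : nat) : nat := index ((cpoly c).[felt i])%R els.

Lemma k_gt1 : 1 < k.
Proof. by rewrite -{1}(expn0 2) ltn_exp2l. Qed.

Lemma small_k l c : c <= l -> c < k^l.
Proof.
move=> cl; apply: (leq_trans (ltn_expl c (isT : 1 < 2))).
apply: (@leq_trans (2 ^ l)); first by rewrite leq_exp2l.
rewrite -expnM leq_exp2l // leq_pmull //.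
Qed.

Lemma code_lt c i : code c i < k.
Proof. by rewrite /code -size_els index_mem mem_els. Qed.

Lemma coef_cpoly c l : ((cpoly c)`_l)%R = felt (digit c l).
Proof.
rewrite coef_poly; case: ltnP => // cl.
by rewrite /digit divn_small ?mod0n // small_k.
Qed.

Lemma code_eq c c' i : (code c i == code c' i) = (((cpoly c).[felt i])%R == ((cpoly c').[felt i])%R).
Proof.
apply/eqP/eqP => [H|H]; last by rewrite /code H.
move: H; rewrite /code => H.
by rewrite -(nth_index 0%R (mem_els ((cpoly c).[felt i])%R)) H nth_index // mem_els.
Qed.

Lemma felt_inj d d' : d < k -> d' < k -> felt d = felt d' -> d = d'.
Proof.
move=> hd hd' H; apply/eqP; rewrite -(nth_uniq 0%R _ _ els_uniq) ?size_els //.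
exact/eqP.
Qed.

Lemma digit_lt c l : digit c l < k.
Proof. by rewrite /digit ltn_mod expn_gt0. Qed.

Lemma digits_eq t c c' : c < k ^ t.+1 -> c' < k ^ t.+1 ->
  (forall l, l <= t -> digit c l = digit c' l) -> c = c'.
Proof.
elim: t c c' => [|t IH] c c' hc hc' H.
  by move: (H 0 (leqnn 0)); rewrite /digit !expn0 !divn1 !modn_small // -(expn1 k).
rewrite (divn_eq c k) (divn_eq c' k).
have := H 0 isT; rewrite /digit !expn0 !divn1 => ->.
congr (_ * _ + _); apply: IH.
- by rewrite ltn_divLR ?expn_gt0 // -expnSr.
- by rewrite ltn_divLR ?expn_gt0 // -expnSr.
move=> l hl; move: (H l.+1 hl); by rewrite /digit expnS -!divnMA.
Qed.

Lemma size_cpoly_diff t c c' : c < k ^ t.+1 -> c' < k ^ t.+1 ->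
  size (cpoly c - cpoly c')%R <= t.+1.
Proof.
move=> hc hc'; apply/leq_sizeP => l hl.
rewrite coefB !coef_cpoly /digit !divn_small ?mod0n ?subrr //.
- apply: leq_trans hc' _; by rewrite leq_exp2l // k_gt1.
- apply: leq_trans hc _; by rewrite leq_exp2l // k_gt1.
Qed.

Lemma code_agree t c c' : c < k ^ t.+1 -> c' < k ^ t.+1 -> c != c' ->
  #|[set i : 'I_k | code c i == code c' i]| <= t.
Proof.
move=> hc hc' neq.
set D := (cpoly c - cpoly c')%R.
have D0 : D != 0%R.
  apply: contra neq => /eqP D0; apply/eqP; apply: (digits_eq hc hc') => l _.
  apply: felt_inj; rewrite ?digit_lt //.
  by rewrite -!coef_cpoly; apply/eqP; rewrite -subr_eq0 -coefB -/D D0 coef0.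
pose rs := map (fun i : 'I_k => felt (val i)) (enum [set i : 'I_k | code c i == code c' i]).
have urs : uniq rs.
  rewrite /rs map_inj_in_uniq ?enum_uniq // => i i' _ _ H.
  apply: ord_inj; exact: (felt_inj (ltn_ord i) (ltn_ord i') H).
have ars : all (root D) rs.
  apply/allP => x /mapP [i]; rewrite mem_enum inE code_eq => /eqP H ->.
  by rewrite /root hornerD hornerN H subrr.
have := max_poly_roots D0 ars urs.
rewrite size_map -cardE => H; rewrite -ltnS; apply: leq_trans H _.
exact: size_cpoly_diff.
Qed.
End Code.

End CodeM.
Import CodeM.


Lemma pow_sq_aux d : (d + 7) * (d + 7) <= 2 ^ (d + 6).
Proof.
elim: d => [|d IH]; first by [].
have -> : 2 ^ (d.+1 + 6) = 2 * 2 ^ (d + 6) by rewrite addSn expnS.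
move: IH; set y := 2 ^ (d + 6) => IH.
have : 2 * (d + 7) + 1 <= (d + 7) * (d + 7) by nia.
nia.
Qed.

Lemma pow_sq u : 7 <= u -> u * u <= 2 ^ u.-1.
Proof.
move=> h; have := pow_sq_aux (u - 7).
have -> : u - 7 + 7 = u by lia. by have -> : u - 7 + 6 = u.-1 by lia.
Qed.

Lemma pow_lin_aux d : 24 + 16 * (d + 10) <= 2 ^ (d + 9).
Proof.
elim: d => [|d IH]; first by [].
have -> : 2 ^ (d.+1 + 9) = 2 * 2 ^ (d + 9) by rewrite addSn expnS.
move: IH; set y := 2 ^ (d + 9) => IH.
nia.
Qed.

Lemma pow_lin u : 10 <= u -> 24 + 16 * u <= 2 ^ u.-1.
Proof.
move=> h; have := pow_lin_aux (u - 10).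
have -> : u - 10 + 10 = u by lia. by have -> : u - 10 + 9 = u.-1 by lia.
Qed.

Definition Bc := locked (2 ^ 128).
Lemma Bc_eq : Bc = 2 ^ 128. Proof. by rewrite /Bc -lock. Qed.
Definition g (L : nat) := 6 * up_log 2 L + 6.

Lemma g_mono x y : x <= y -> g x <= g y.
Proof. by move=> h; rewrite /g leq_add2r leq_mul2l leq_up_log. Qed.

Lemma le_pow10_Bc : 2 ^ 10 <= Bc.
Proof. rewrite Bc_eq; apply: leq_pexp2l => //. Qed.

Lemma g_le_B y : y <= Bc -> g y <= Bc.
Proof.
move=> h; have : up_log 2 y <= 128 by apply: up_log_min; rewrite // -Bc_eq.
move: le_pow10_Bc; rewrite /g. have -> : 2 ^ 10 = 1024 by []. lia.
Qed.

Lemma Bc_lt_up x : Bc < x -> 128 < up_log 2 x.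
Proof.
move=> h; rewrite -(ltn_exp2l _ _ (isT : 1 < 2)) -Bc_eq.
exact: leq_trans h (up_logP _ _).
Qed.

Lemma up_log_lt x : 1 < x -> 2 ^ (up_log 2 x).-1 < x.
Proof. by move=> h; apply: up_log_gtn. Qed.

Lemma gg_le x : Bc < x -> g (g x) <= trunc_log 2 x.
Proof.
move=> hx.
set tl := trunc_log 2 x.
have tl128 : 128 <= tl by apply: trunc_log_max => //; rewrite -Bc_eq; apply: ltnW.
have hu : up_log 2 x <= tl.+1.
  by apply: up_log_min => //; apply: ltnW; apply: trunc_log_ltn.
have h1 : g x <= 8 * tl by rewrite /g; lia.
apply: leq_trans (g_mono h1) _.
set u' := up_log 2 tl.
have h2 : up_log 2 (8 * tl) <= 3 + u'.
  apply: up_log_min => //; rewrite expnD; apply: leq_mul => //; exact: up_logP.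
rewrite /g.
case: (leqP 10 u') => hu'.
  have := pow_lin hu'; have := @up_log_lt tl (leq_trans (isT : 1 < 128) tl128).
  rewrite -/u'. lia.
lia.
Qed.

Lemma tl_lt y : 0 < y -> trunc_log 2 y < y.
Proof.
move=> hy; apply: leq_trans (ltn_expl _ (isT : 1 < 2)) (trunc_logP _ hy) => //.
Qed.

Lemma logstar_aux_indep f f' y : y <= f -> y <= f' -> logstar_aux f y = logstar_aux f' y.
Proof.
elim: f f' y => [|f IH] f' y hf hf'.
  move: hf hf'; rewrite leqn0 => /eqP -> _; by case: f'.
case: f' hf' => [|f'] hf' /=.
  by move: hf'; rewrite leqn0 => /eqP ->.
case: ifP => // hy1; congr S.
have y0 : 0 < y by case: (y) hy1.
have := tl_lt y0 => ht.
apply: IH; rewrite -ltnS; exact: leq_trans ht _.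
Qed.

Lemma logstarS x : 1 < x -> logstar x = (logstar (trunc_log 2 x)).+1.
Proof.
move=> hx; rewrite /logstar; case: x hx => [|x] //= hx.
rewrite leqNgt hx /=; congr S; apply: logstar_aux_indep => //.
by rewrite -ltnS; apply: tl_lt.
Qed.

Lemma logstar_small x : x <= 1 -> logstar x = 0.
Proof. by case: x => [|[|x]]. Qed.

Lemma logstar_mono x y : x <= y -> logstar x <= logstar y.
Proof.
elim: y {-2}y (leqnn y) x => [|Y IH] y hy x hxy.
  move: hy; rewrite leqn0 => /eqP hy; subst y; move: hxy; by rewrite leqn0 => /eqP ->.
case: (leqP x 1) => hx; first by rewrite logstar_small.
rewrite (logstarS hx) (logstarS (leq_trans hx hxy)) ltnS.
apply: IH; last exact: leq_trunc_log.
rewrite -ltnS; apply: leq_trans hy; apply: tl_lt; lia.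
Qed.

Lemma iter_g_mono s x y : x <= y -> iter s g x <= iter s g y.
Proof. elim: s => //= s IH h; apply: g_mono; exact: IH. Qed.

Lemma iter_g_stay s s' y : iter s g y <= Bc -> iter (s' + s) g y <= Bc.
Proof. move=> h; rewrite iterD; elim: s' => //= s' IH; exact: g_le_B. Qed.

Lemma iterB x : iter (2 * logstar x) g x <= Bc.
Proof.
elim: x {-2}x (leqnn x) => [|X IH] x hx.
  by move: hx; rewrite leqn0 => /eqP ->; rewrite logstar_small.
case: (leqP x Bc) => hB.
  by have := @iter_g_stay 0 (2 * logstar x) x; rewrite addn0; apply.
have x1 : 1 < x by apply: (leq_ltn_trans _ hB); rewrite Bc_eq expn_gt0.
rewrite (logstarS x1) mulnS addnC iterD.
apply: leq_trans (iter_g_mono _ (gg_le hB)) _.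
apply: IH; rewrite -ltnS; apply: leq_trans hx; apply: tl_lt; lia.
Qed.


Lemma kpos e : 0 < 2 ^ e.+1. Proof. by rewrite expn_gt0. Qed.

Definition conf e c (l : seq nat) i :=
  count (fun c' => (c' != c) && (code e c' i == code e c i)) l.
Definition pick e c l : nat := val [arg min_(i < Ordinal (kpos e)) conf e c l i].
Definition newcol e c l := pick e c l * 2 ^ e.+1 + code e c (pick e c l).

Lemma pick_lt e c l : pick e c l < 2 ^ e.+1.
Proof. rewrite /pick; exact: ltn_ord. Qed.

Lemma pick_min e c l i : i < 2 ^ e.+1 -> conf e c l (pick e c l) <= conf e c l i.
Proof.
move=> hi; rewrite /pick; case: arg_minnP => // j _ H.
exact: (H (Ordinal hi)).
Qed.

Lemma newcol_lt e c l : newcol e c l < 2 ^ e.+1 * 2 ^ e.+1.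
Proof.
rewrite /newcol; have := pick_lt e c l; have := code_lt e c (pick e c l).
set K := 2 ^ e.+1; set a := pick e c l; set b := code e c a; nia.
Qed.

Lemma divmodK a b K : b < K -> (a * K + b) %/ K = a /\ (a * K + b) %% K = b.
Proof.
move=> hb; have K0 : 0 < K by apply: leq_ltn_trans (leq0n b) hb.
by rewrite divnMDl // modnMDl divn_small // modn_small // addn0; split.
Qed.

Lemma decode a b a' b' K : b < K -> b' < K -> a * K + b = a' * K + b' -> a = a' /\ b = b'.
Proof.
move=> hb hb' H; have [h1 h2] := divmodK a hb; have [h3 h4] := divmodK a' hb'.
split; first by rewrite -h1 H h3.
by rewrite -h2 H h4.
Qed.

Lemma newcol_eq e c l c' l' : newcol e c' l' = newcol e c l ->
  pick e c' l' = pick e c l /\ code e c' (pick e c l) = code e c (pick e c l).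
Proof.
rewrite /newcol => H.
have [h1 h2] := decode (code_lt _ _ _) (code_lt _ _ _) H.
by rewrite h1 in h2; split.
Qed.

Lemma card_count_iota K (P : pred nat) : #|[set i : 'I_K | P i]| = count P (iota 0 K).
Proof.
rewrite -sum1_card.
rewrite (eq_bigl (fun i : 'I_K => P i)); last by move=> i; rewrite inE.
by rewrite -(big_mkord P (fun _ => 1)) /index_iota subn0 sum1_count.
Qed.

Lemma sumn_mapD (T : Type) (f g : T -> nat) l :
  sumn (map (fun x => f x + g x) l) = sumn (map f l) + sumn (map g l).
Proof. elim: l => //= x l ->; lia. Qed.

Lemma sumn_count (T : Type) (a : pred T) l : sumn (map (fun x => nat_of_bool (a x)) l) = count a l.
Proof. by elim: l => //= x l ->. Qed.

Lemma sumn_count_swap (P : nat -> nat -> bool) s l :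
  sumn (map (fun i => count (P i) l) s) = sumn (map (fun c => count (fun i => P i c) s) l).
Proof.
elim: s => [|i s IH] /=; first by elim: l.
by rewrite IH sumn_mapD sumn_count.
Qed.

Lemma sumn_ge (T : eqType) (f : T -> nat) m l : (forall x, x \in l -> m <= f x) ->
  m * size l <= sumn (map f l).
Proof.
elim: l => [|x l IH] H /=; first by rewrite muln0.
rewrite mulnS; apply: leq_add; first by apply: H; rewrite inE eqxx.
by apply: IH => y hy; apply: H; rewrite inE hy orbT.
Qed.

Lemma sumn_le (T : eqType) (f : T -> nat) m l : (forall x, x \in l -> f x <= m) ->
  sumn (map f l) <= size l * m.
Proof.
elim: l => [|x l IH] H //=.
rewrite mulSn; apply: leq_add; first by apply: H; rewrite inE eqxx.
by apply: IH => y hy; apply: H; rewrite inE hy orbT.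
Qed.

Lemma agree_count e t c c' : c < (2 ^ e.+1) ^ t.+1 -> c' < (2 ^ e.+1) ^ t.+1 -> c' != c ->
  count (fun i => code e c' i == code e c i) (iota 0 (2 ^ e.+1)) <= t.
Proof.
move=> hc hc' ne; rewrite -card_count_iota; exact: code_agree.
Qed.

Lemma pick_conf e t c l : c < (2 ^ e.+1) ^ t.+1 ->
  (forall c', c' \in l -> c' < (2 ^ e.+1) ^ t.+1) ->
  conf e c l (pick e c l) * 2 ^ e.+1 <= size l * t.
Proof.
move=> hc hl.
have H1 : conf e c l (pick e c l) * 2 ^ e.+1 <= sumn (map (conf e c l) (iota 0 (2 ^ e.+1))).
  rewrite -{1}(size_iota 0 (2 ^ e.+1)); apply: sumn_ge => i; rewrite mem_iota add0n.
  exact: pick_min.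
apply: leq_trans H1 _; rewrite /conf sumn_count_swap.
apply: sumn_le => c' hc'.
case: (eqVneq c' c) => [->|ne].
  by rewrite (eq_count (a2 := pred0)) ?count_pred0 // => i /=; rewrite eqxx.
apply: leq_trans (agree_count hc (hl c' hc') ne).
by apply: sub_count => i /=.
Qed.

Lemma ceil_bound L d : 0 < d -> L <= d * (L.-1 %/ d).+1.
Proof. case: L => // L hd /=; rewrite mulnC; exact: ltn_ceil. Qed.

Lemma pow_ceil L e : 2 ^ L <= (2 ^ e.+1) ^ (L.-1 %/ e.+1).+1.
Proof. by rewrite -expnM leq_exp2l // ceil_bound. Qed.

Section Params.
Variables (Delta p : nat).

Definition rho := up_log 2 (Delta %/ p.+1).+1.
Definition thr := 8 * rho + Bc.
Definition est L := rho + 2 + 2 * up_log 2 L.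
Definition tst L := L.-1 %/ (est L).+1.
Definition Lnext L := if thr < L then 2 * (est L).+1 else L.
Definition Lseq L0 s := iter s Lnext L0.
Definition inc L := Delta * tst L %/ 2 ^ (est L).+1.
Definition Dnext L D := if thr < L then D + inc L else D.
Fixpoint Dseq L0 s := if s is s'.+1 then Dnext (Lseq L0 s') (Dseq L0 s') else 0.

Section Graph.
Variables (M L0 : nat) (E : nat -> nat -> bool).
Definition nbrs x := [seq y <- iota 0 M | E x y].
Fixpoint col s x := if s is s'.+1 then
   (let L := Lseq L0 s' in if thr < L then newcol (est L) (col s' x) (map (col s') (nbrs x))
    else col s' x) else x.

Lemma nbrs_lt x y : y \in nbrs x -> y < M.
Proof. by rewrite mem_filter mem_iota add0n => /andP[]. Qed.

Hypothesis hdeg : forall x, size (nbrs x) <= Delta.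
Hypothesis hM : M <= 2 ^ L0.
Hypothesis hirr : forall x, E x x = false.

Lemma col_bound s x : x < M -> col s x < 2 ^ Lseq L0 s.
Proof.
elim: s x => [|s IH] x hx /=; first exact: leq_trans hx hM.
rewrite /Lnext; case: ifP => _; last exact: IH.
rewrite mulnC expnM expnS expn1; exact: newcol_lt.
Qed.

Lemma col_defect s x : x < M ->
  count (fun y => col s y == col s x) (nbrs x) <= Dseq L0 s.
Proof.
elim: s x => [|s IH] x hx /=.
  rewrite (eq_in_count (a2 := pred0)) ?count_pred0 // => y.
  rewrite mem_filter => /andP [hy _] /=; apply/eqP => hyx; subst y.
  by rewrite hirr in hy.
rewrite /Dnext -/(Lseq L0 s); case: ifP => act; last exact: IH.
set L := Lseq L0 s; set e := est L; set t := tst L.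
set i := pick e (col s x) (map (col s) (nbrs x)).
have hcol z : z < M -> col s z < (2 ^ e.+1) ^ t.+1.
  move=> hz; exact: leq_trans (col_bound s hz) (pow_ceil _ _).
pose a := fun y => col s y == col s x.
pose b := fun y => (col s y != col s x) && (code e (col s y) i == code e (col s x) i).
have sub : subpred (fun y => newcol e (col s y) (map (col s) (nbrs y)) ==
                             newcol e (col s x) (map (col s) (nbrs x))) (predU a b).
  move=> y /eqP /newcol_eq [_ h]; rewrite /= /a /b -/i h eqxx andbT.
  by case: eqP.
rewrite (eq_count (a2 := fun y => newcol e (col s y) (map (col s) (nbrs y)) ==
                             newcol e (col s x) (map (col s) (nbrs x)))); last first.
  by [].
apply: (leq_trans (sub_count sub (nbrs x))).
have := count_predUI a b (nbrs x); move=> HU.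
have hb : count b (nbrs x) <= inc L.
  have -> : count b (nbrs x) = conf e (col s x) (map (col s) (nbrs x)) i.
    by rewrite /conf count_map.
  rewrite /inc leq_divRL ?kpos // -/e -/t.
  apply: leq_trans (pick_conf (hcol x hx) _) _.
    by move=> c' /mapP [y hy ->]; apply: hcol; exact: nbrs_lt hy.
  by rewrite size_map leq_mul2r hdeg orbT.
have := IH x hx; rewrite -/a => ha.
lia.
Qed.
End Graph.

Lemma rho_spec : Delta < 2 ^ rho * p.+1.
Proof.
apply: leq_trans (ltn_ceil Delta (ltn0Sn p)) _.
by apply: leq_mul => //; exact: up_logP.
Qed.

Lemma K_big L : 8 * Delta * (L * L) <= 2 ^ (est L).+1 * p.+1.
Proof.
have -> : 2 ^ (est L).+1 = 2 ^ rho * 8 * (2 ^ up_log 2 L * 2 ^ up_log 2 L).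
  have -> : 8 = 2 ^ 3 by [].
  rewrite -!expnD; congr (2 ^ _); rewrite /est; lia.
have h1 := ltnW rho_spec.
have h2 : L <= 2 ^ up_log 2 L by exact: up_logP.
set u := 2 ^ up_log 2 L in h2 *; set r := 2 ^ rho in h1 *.
apply: (@leq_trans (8 * (r * p.+1) * (u * u))).
  by apply: leq_mul; [apply: leq_mul|apply: leq_mul].
nia.
Qed.

Lemma inc_bound L : 8 * L * inc L <= p.+1.
Proof.
set K := 2 ^ (est L).+1.
have K0 : 0 < K by rewrite expn_gt0.
have h1 : inc L * K <= Delta * L.
  apply: leq_trans (leq_trunc_div _ _) _; rewrite leq_mul2l /tst; apply/orP; right.
  by apply: leq_trans (leq_div _ _) _; rewrite leq_pred.
have h2 := K_big L; rewrite -/K in h2.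
rewrite -(leq_pmul2r K0).
nia.
Qed.

Lemma halve L : thr < L -> 2 * (2 * (est L).+1) <= L.
Proof.
rewrite /thr /est => h.
have hu := Bc_lt_up (leq_ltn_trans (leq_addl _ _) h).
have hl := pow_lin (ltnW (leq_trans (isT : 10 < 129) hu)).
have B2 : 2 <= Bc by apply: leq_trans le_pow10_Bc.
have L1 : 1 < L by lia.
have := up_log_lt L1.
lia.
Qed.

Lemma LD_inv L0 s : (Dseq L0 s = 0 \/ 0 < Lseq L0 s) /\ 8 * Lseq L0 s * Dseq L0 s <= p.+1.
Proof.
elim: s => [|s [IH1 IH2]] /=; first by rewrite muln0; split; [left|].
rewrite /Dnext /Lnext -/(Lseq L0 s); case: ifP => act; last by split.
split; first by right.
have := halve act; have := inc_bound (Lseq L0 s).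
set L := Lseq L0 s; set D := Dseq L0 s; set i := inc L; set L' := 2 * (est L).+1.
nia.
Qed.

Lemma Lseq_bound L0 s : Lseq L0 s <= maxn thr (iter s g L0).
Proof.
elim: s => [|s IH]; first exact: leq_maxr.
rewrite /Lseq /=.
rewrite /Lnext -/(Lseq L0 s); case: ifP => act.
  case: (leqP rho (up_log 2 (Lseq L0 s))) => hr.
    have h1 : Lseq L0 s <= iter s g L0.
      move: IH; rewrite leq_max => /orP [h|] //; by rewrite leqNgt act in h.
    have h2 := g_mono h1.
    rewrite leq_max; apply/orP; right; apply: leq_trans h2.
    rewrite /est /g; lia.
  rewrite leq_max; apply/orP; left; rewrite /est /thr.
  have : 6 <= Bc by apply: leq_trans le_pow10_Bc.
  lia.
by rewrite leq_max leqNgt act.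
Qed.

Lemma Lseq_final L0 R : 2 * logstar L0 <= R -> Lseq L0 R <= thr.
Proof.
move=> hR; apply: leq_trans (Lseq_bound L0 R) _.
rewrite geq_max leqnn /=.
have := @iter_g_stay (2 * logstar L0) (R - 2 * logstar L0) L0 (iterB L0).
rewrite subnK // => h; apply: leq_trans h _; exact: leq_addl.
Qed.

Lemma Dseq_final L0 s : 8 * Dseq L0 s <= p.+1.
Proof.
have [[h|h] h2] := LD_inv L0 s; first by rewrite h.
apply: leq_trans h2; rewrite leq_mul2r leq_pmulr ?orbT //.
Qed.

Definition Tc := 8 + Bc.
Definition ef := rho + up_log 2 Tc.
Definition Kf := 2 ^ ef.+1.
Definition agreeC c (l : seq nat) i := count (fun c' => code ef c' i == code ef c i) l.
Definition flist c l := [seq i * Kf + code ef c i + 1 | i <- iota 0 Kf & agreeC c l i <= p].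

Lemma Kf_split : Kf = 2 * 2 ^ rho * 2 ^ up_log 2 Tc.
Proof. by rewrite /Kf /ef expnS expnD mulnA. Qed.

Lemma flist_decode c l x : x \in flist c l ->
  exists i, [/\ i < Kf, agreeC c l i <= p & x = i * Kf + code ef c i + 1].
Proof.
case/mapP => i; rewrite mem_filter mem_iota add0n => /andP [ha hi] ->.
by exists i.
Qed.

Lemma flist_range c l x : x \in flist c l -> 0 < x <= Kf * Kf.
Proof.
case/flist_decode => i [hi _ ->]; rewrite addn1 ltn0Sn /=.
have := code_lt ef c i; rewrite -/Kf; nia.
Qed.

Lemma flist_uniq c l : uniq (flist c l).
Proof.
rewrite map_inj_in_uniq ?filter_uniq ?iota_uniq // => i j _ _ /eqP.
rewrite !addn1 eqSS => /eqP H.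
by have [] := decode (code_lt ef c i) (code_lt ef c j) H.
Qed.

Lemma count_big (f : nat -> nat) s : count (fun i => p < f i) s * p.+1 <= sumn (map f s).
Proof.
elim: s => //= i s IH; rewrite mulnDl; apply: leq_add => //.
by case: ltnP => //= h; rewrite mul1n.
Qed.

Lemma sumn_le2 (f : nat -> nat) (a : pred nat) K t l :
  (forall x, x \in l -> f x <= a x * K + t) ->
  sumn (map f l) <= count a l * K + size l * t.
Proof.
elim: l => //= x l IH H.
have h1 := H x (mem_head _ _).
have h2 := IH (fun y hy => H y (@mem_behead _ (x :: l) y hy)).
nia.
Qed.

Lemma pow_up_le x : 0 < x -> 2 ^ up_log 2 x <= 2 * x.
Proof.
move=> hx; case: (leqP x 1) => h.
  have -> : up_log 2 x = 0 by apply/eqP; rewrite up_log_eq0 h orbT.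
  rewrite expn0; lia.
have hlt := up_log_gtn (isT : 1 < 2) h.
have u0 : 0 < up_log 2 x by rewrite up_log_gt0 h.
rewrite -(prednK u0) expnS; lia.
Qed.

Lemma Kf_ge : 2 * Delta * Tc <= Kf * p.+1.
Proof.
rewrite Kf_split.
have h1 := ltnW rho_spec.
have h2 : Tc <= 2 ^ up_log 2 Tc by exact: up_logP.
set u := 2 ^ up_log 2 Tc in h2 *; set r := 2 ^ rho in h1 *.
apply: (@leq_trans (2 * (r * p.+1) * u)).
  by apply: leq_mul; [apply: leq_mul|].
nia.
Qed.

Lemma Kf_le : 0 < p -> p <= Delta -> Kf * p <= 16 * Tc * Delta.
Proof.
move=> p0 pD; rewrite Kf_split.
have T0 : 0 < Tc by rewrite /Tc.
have h1 := pow_up_le T0.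
have h2 := pow_up_le (ltn0Sn (Delta %/ p.+1)); rewrite -/rho in h2.
have h3 : Delta %/ p.+1 * p.+1 <= Delta by exact: leq_trunc_div.
set q := Delta %/ p.+1 in h2 h3.
set u := 2 ^ up_log 2 Tc in h1 *; set r := 2 ^ rho in h2 *.
apply: (@leq_trans (2 * (2 * q.+1) * (2 * Tc) * p)).
  by apply: leq_mul => //; apply: leq_mul => //; apply: leq_mul.
nia.
Qed.

Lemma tf_le L : L <= thr -> L.-1 %/ ef.+1 <= Tc.
Proof.
move=> hL; rewrite -ltnS ltn_divLR // /Tc /ef.
rewrite /thr in hL; nia.
Qed.

Lemma flist_size L c l : c < 2 ^ L -> (forall c', c' \in l -> c' < 2 ^ L) -> L <= thr ->
  size l <= Delta -> 8 * count (pred1 c) l <= p.+1 -> 0 < p ->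
  Delta <= 4 * (size (flist c l) * p).
Proof.
move=> hc hl hL hs hsame p0.
set t := L.-1 %/ ef.+1.
have htf : t <= Tc := tf_le hL.
have hcK : c < Kf ^ t.+1 by apply: leq_trans hc (pow_ceil _ _).
pose S := sumn (map (agreeC c l) (iota 0 Kf)).
have hS1 := count_big (agreeC c l) (iota 0 Kf); rewrite -/S in hS1.
have hS2 : S <= count (pred1 c) l * Kf + size l * t.
  rewrite /S /agreeC sumn_count_swap; apply: sumn_le2 => c' hc'.
  case: (eqVneq c' c) => [->|ne] /=.
    rewrite eqxx mul1n; apply: leq_trans (count_size _ _) _; by rewrite size_iota leq_addr.
  rewrite /= (negbTE ne) mul0n add0n.
  exact: agree_count hcK (leq_trans (hl c' hc') (pow_ceil _ _)) ne.
have hgood : size (flist c l) + count (fun i => p < agreeC c l i) (iota 0 Kf) = Kf.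
  rewrite size_map size_filter -{3}(size_iota 0 Kf) -(count_predC (fun i => agreeC c l i <= p)).
  by congr (_ + _); apply: eq_count => i /=; rewrite ltnNge.
have hK := Kf_ge.
have T1 : 1 <= Tc by rewrite /Tc.
set good := size (flist c l) in hgood *.
set bad := count _ (iota 0 Kf) in hS1 hgood.
set same := count (pred1 c) l in hS2 hsame.
have e1 : 8 * bad * p.+1 <= 5 * Kf * p.+1.
  apply: (@leq_trans (8 * S)); first by nia.
  apply: (@leq_trans (8 * (same * Kf) + 8 * (Delta * Tc))).
    have : size l * t <= Delta * Tc by apply: leq_mul.
    nia.
  nia.
have e2 : 8 * bad <= 5 * Kf by rewrite -(leq_pmul2r (ltn0Sn p)).
have e3 : Delta <= Kf * p.
  have : 2 * Delta * Tc <= 2 * (Kf * p) by nia.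
  nia.
nia.
Qed.

End Params.


Section World.
Variables (T : finType) (e : rel T) (id : T -> nat).
Hypothesis esym : symmetric e.
Hypothesis eirr : irreflexive e.
Hypothesis idinj : injective id.

Definition Et (a b : nat) : bool := [exists x, exists y, [&& e x y, id x == a & id y == b]].
Definition Ev r v (a b : nat) : bool :=
  [exists x, exists y, [&& x \in inner e r v, e x y, id x == a & id y == b]].

Lemma Et_id v b : Et (id v) b = [exists y, e v y && (id y == b)].
Proof.
apply/existsP/existsP => [[x /existsP [y /and3P [hxy /eqP hx hy]]]|[y /andP [hy hb]]].
  by rewrite (idinj hx) in hxy; exists y; rewrite hxy hy.
by exists v; apply/existsP; exists y; rewrite hy eqxx hb.
Qed.

Lemma Et_idid v u : Et (id v) (id u) = e v u.
Proof.
rewrite Et_id; apply/existsP/idP => [[y /andP [hy /eqP h]]|h].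
  by rewrite -(idinj h).
by exists u; rewrite h eqxx.
Qed.

Lemma Ev_id r v w b : w \in inner e r v -> Ev r v (id w) b = Et (id w) b.
Proof.
move=> hw; rewrite Et_id.
apply/existsP/existsP => [[x /existsP [y /and4P [_ hxy /eqP hx hy]]]|[y /andP [hy hb]]].
  by rewrite (idinj hx) in hxy; exists y; rewrite hxy hy.
by exists w; apply/existsP; exists y; rewrite hw hy eqxx hb.
Qed.

Lemma Et_irr x : Et x x = false.
Proof.
apply/negbTE/existsP => [[a /existsP [b /and3P [hab /eqP ha /eqP hb]]]].
by move: hab; rewrite -hb in ha; rewrite (idinj ha) eirr.
Qed.

Lemma Et_inv a b : Et a b -> exists v u, [/\ a = id v, b = id u & e v u].
Proof.
by case/existsP => v /existsP [u /and3P [h /eqP <- /eqP <-]]; exists v, u.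
Qed.

Lemma ball_sub r1 r2 v : r1 <= r2 -> ball e r1 v \subset ball e r2 v.
Proof.
elim: r2 => [|r2 IH]; first by rewrite leqn0 => /eqP ->.
rewrite leq_eqVlt => /orP [/eqP ->|h]; first exact: subxx.
apply: subset_trans (IH h) _; apply/subsetP => x hx /=; by rewrite inE hx.
Qed.

Lemma ball_nbr r v w u : w \in ball e r v -> e w u -> u \in ball e r.+1 v.
Proof.
move=> hw hu /=; rewrite !inE; apply/orP; right; apply/existsP; exists w; by rewrite hw.
Qed.

Lemma ball_self r v : v \in ball e r v.
Proof.
elim: r => [|r IH] /=; first by rewrite inE.
by rewrite inE IH.
Qed.

Variables (Delta p M L0 : nat).
Hypothesis idM : forall v, id v < M.

Lemma nbrs_Ev r v w : w \in inner e r v -> nbrs M (Ev r v) (id w) = nbrs M Et (id w).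
Proof. move=> hw; apply: eq_filter => b; exact: Ev_id. Qed.

Lemma locality r v s : s <= r -> forall w, w \in ball e (r - s) v ->
  col Delta p M L0 (Ev r v) s (id w) = col Delta p M L0 Et s (id w).
Proof.
elim: s => [|s IH] // hs w hw /=.
have hw1 : w \in ball e (r - s) v.
  apply: (subsetP (ball_sub v (_ : r - s.+1 <= r - s))) hw; lia.
have hin : w \in inner e r v.
  case: r hs hw {hw1 IH} => // r hs hw /=.
  apply: (subsetP (ball_sub v (_ : r.+1 - s.+1 <= r))) hw; lia.
rewrite (IH (ltnW hs) w hw1).
have hn : nbrs M (Ev r v) (id w) = nbrs M Et (id w) by exact: nbrs_Ev.
case: (thr Delta p < Lseq Delta p L0 s); last reflexivity.
set A := col Delta p M L0 (Ev r v) s.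
set B := col Delta p M L0 Et s.
rewrite hn.
suff -> : [seq A i | i <- nbrs M Et (id w)] = [seq B i | i <- nbrs M Et (id w)] by [].
apply/eq_in_map => y; rewrite mem_filter => /andP [hy _].
have [v' [u [hv' hu hwu]]] := Et_inv hy.
rewrite /A /B.
rewrite hu; apply: IH; first exact: ltnW.
rewrite -(idinj hv') in hwu.
have -> : r - s = (r - s.+1).+1 by lia.
exact: ball_nbr hw hwu.
Qed.

Lemma card_nbrs v (Q : pred nat) :
  #|[set u | e v u & Q (id u)]| = count Q (nbrs M Et (id v)).
Proof.
rewrite -size_filter cardE -(size_map id).
apply: perm_size; apply: uniq_perm.
- by rewrite map_inj_uniq ?enum_uniq.
- by rewrite !filter_uniq ?iota_uniq.
move=> y; apply/mapP/idP => [[u hu ->]|].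
  move: hu; rewrite mem_enum inE => /andP [hvu hQ].
  by rewrite mem_filter hQ mem_filter Et_idid hvu mem_iota add0n idM.
rewrite mem_filter => /andP [hQ]; rewrite mem_filter => /andP [hE _].
move: hE; rewrite Et_id => /existsP [u /andP [hvu /eqP hu]].
by exists u => //; rewrite mem_enum inE hvu hu.
Qed.

Lemma deg_nbrs x : size (nbrs M Et x) <= maxdeg e.
Proof.
case: (pickP (fun w => id w == x)) => [w /eqP <-|none].
  rewrite -count_predT -card_nbrs.
  apply: leq_trans (leq_bigmax w); rewrite /deg; apply: subset_leq_card.
  by apply/subsetP => u; rewrite !inE => /andP [].
rewrite /nbrs (eq_in_filter (a2 := pred0)) ?filter_pred0 // => y _.
apply/negbTE/existsP => [[a /existsP [b /and3P [_ /eqP ha _]]]].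
by move: (none a); rewrite ha eqxx.
Qed.
End World.

Lemma L0_le a n : a * up_log 2 n <= maxn n (a * (a + 7)).
Proof.
case: (ltnP n (2 ^ (a + 7))) => hn.
  have : up_log 2 n <= a + 7 by apply: up_log_min => //; exact: ltnW.
  move=> h; rewrite leq_max; apply/orP; right; exact: leq_mul.
set u := up_log 2 n.
have hu : a + 7 <= u.
  rewrite -(leq_exp2l _ _ (isT : 1 < 2)); apply: leq_trans hn _; exact: up_logP.
have n1 : 1 < n.
  apply: leq_trans hn; rewrite expnD; apply: leq_trans (leq_pmull _ _) => //.
  by rewrite expn_gt0.
have h1 := up_log_gtn (isT : 1 < 2) n1; rewrite -/u in h1.
have h2 := pow_sq (leq_trans (leq_addl a 7) hu).
rewrite leq_max; apply/orP; left.
apply: leq_trans (ltnW h1); apply: leq_trans h2; apply: leq_mul => //; lia.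
Qed.

Lemma logstar_max x y : logstar (maxn x y) <= logstar x + logstar y.
Proof.
by case: (leqP x y) => h; [exact: leq_addl | exact: leq_addr].
Qed.

Theorem theorem5 :
  exists C d : nat, 0 < C /\ 0 < d /\
  forall a : nat,
  exists (rounds : nat -> nat -> nat -> nat) (A : local_algo) (K : nat),
    (forall n Delta p, rounds n Delta p <= K * (logstar n).+1) /\
    forall (T : finType) (e : rel T) (id : T -> nat) (p : nat),
      simple_graph e ->
      injective id ->
      (forall v, id v < #|T| ^ a) ->
      1 <= p <= maxdeg e ->
      let n := #|T| in
      let Delta := maxdeg e in
      let S := fun v => A n Delta p (view e id (rounds n Delta p) v) in
      exists m : nat,
        m * p ^ 2 <= C * Delta ^ 2 /\
        (forall v, forall x, x \in S v -> 1 <= x <= m) /\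
        (forall v, Delta <= d * (size (undup (S v)) * p)) /\
        (forall phi : T -> nat, (forall v, phi v \in S v) -> defective e p phi).
Proof.
exists (256 * Tc * Tc), 4; split; first by rewrite !muln_gt0 /Tc addn_gt0.
split => // a.
pose K0 := 2 + 2 * logstar (a * (a + 7)).
pose Rn n := K0 * (logstar n).+1.
exists (fun n _ _ => (Rn n).+1).
exists (fun n Delta p (vw : nat * (nat -> nat -> bool)) =>
  flist Delta p (col Delta p (n ^ a) (a * up_log 2 n) vw.2 (Rn n) vw.1)
     (map (col Delta p (n ^ a) (a * up_log 2 n) vw.2 (Rn n)) (nbrs (n ^ a) vw.2 vw.1))).
exists K0.+1.
split.
  move=> n _ _; rewrite /Rn mulSn; lia.
move=> T e id p [esym eirr] idinj idlt /andP [p1 pD] n Delta S.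
set M := n ^ a; set L0 := a * up_log 2 n; set R := Rn n.
have hM : M <= 2 ^ L0.
  rewrite /M /L0 mulnC expnM; case: (posnP a) => [->|a0]; first by rewrite !expn0.
  by rewrite leq_exp2r // up_logP.
have hR : 2 * logstar L0 <= R.
  have h := logstar_mono (L0_le a n); have h2 := logstar_max n (a * (a + 7)).
  have h3 := leq_trans h h2; rewrite /R /Rn /K0; move: h3.
  set X := logstar _; set Y := logstar n; set Z := logstar (a * (a + 7)); nia.
pose colR := col Delta p M L0 (Et e id) R.
have hS : forall v, S v = flist Delta p (colR (id v)) (map colR (nbrs M (Et e id) (id v))).
  move=> v; rewrite /S.
  change (flist Delta p (col Delta p M L0 (Ev e id R.+1 v) R (id v))
     (map (col Delta p M L0 (Ev e id R.+1 v) R) (nbrs M (Ev e id R.+1 v) (id v))) =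
     flist Delta p (colR (id v)) (map colR (nbrs M (Et e id) (id v)))).
  have hloc := @locality T e id idinj Delta p M L0 R.+1 v R (leqnSn R).
  rewrite subSnn in hloc.
  have hin : v \in inner e R.+1 v by exact: ball_self.
  have hn := @nbrs_Ev T e id idinj M R.+1 v v hin.
  rewrite hn (hloc v (ball_self _ _ _)).
  set A := col Delta p M L0 (Ev e id R.+1 v) R.
  suff -> : [seq A i | i <- nbrs M (Et e id) (id v)] = map colR (nbrs M (Et e id) (id v)) by [].
  apply/eq_in_map => y; rewrite mem_filter => /andP [hy _].
  have [v' [u [hv' hu hvu]]] := Et_inv hy.
  rewrite -(idinj _ _ hv') in hvu; rewrite hu /A /colR; apply: hloc.
  by have := ball_nbr (ball_self e 0 v) hvu.
have hdeg := deg_nbrs e idinj (M := M) idlt.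
have hirr := Et_irr eirr idinj.
exists (Kf Delta p * Kf Delta p); split.
  have := Kf_le p1 pD; rewrite -/Delta.
  set k := Kf Delta p; rewrite !expnS !expn0 !muln1; nia.
split.
  by move=> v x; rewrite hS => /flist_range.
split.
  move=> v; rewrite hS undup_id ?flist_uniq //.
  apply: (flist_size (L := Lseq Delta p L0 R)) => //.
  - exact: col_bound.
  - move=> c' /mapP [y hy ->]; apply: col_bound => //; exact: nbrs_lt hy.
  - exact: Lseq_final.
  - by rewrite size_map hdeg.
  - rewrite count_map; apply: leq_trans (Dseq_final Delta p L0 R).
    by rewrite leq_mul2l; apply: col_defect.
move=> phi hphi v.
have := hphi v; rewrite hS => /flist_decode [i [hi hagr hv]].
apply: leq_trans hagr.
rewrite /agreeC count_map -(card_nbrs e idinj idlt).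
apply: subset_leq_card; apply/subsetP => u; rewrite !inE => /andP [hvu /eqP hpu].
rewrite hvu /=.
have := hphi u; rewrite hS => /flist_decode [j [hj _ hu]].
move: hpu; rewrite hu hv !addn1 => -[] H.
have [hji hc] := decode (code_lt _ _ _) (code_lt _ _ _) H.
rewrite hji in hc; by rewrite /= hc.
Qed.
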